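(* For every $t\in I$, $\tau\in(0,T-t)$ and $x\in\mathbb{R}^n$, $\widetilde Y(\tau,t,x)\subset\mathrm{cl}\,Y(t,x)$, where $\widetilde Y(\tau,t,x)=\bigcup_{u\in\mathcal{U}}\big(J(t,t+\tau,x,u)+V(t+\tau,x(t+\tau;t,x,u))\big)$.
   Context: Setting (MOC). Fix $T>0$, $I=[0,T]$, integers $n,m,p\ge1$, nonempty compact $U\subset\mathbb{R}^m$. $f:\mathbb{R}^n\times U\to\mathbb{R}^n$ continuous with $\|f(x_1,u)-f(x_2,u)\|\le K_f\|x_1-x_2\|$, $\|f(x,u)\|\le M_f$. $L:\mathbb{R}^n\times U\to\mathbb{R}^p$ continuous, bounded, Lipschitz in $x$ uniformly in $u$. Controls $\mathcal{U}$: bounded Lebesgue measurable $u:I\to U$. $x(s;t,x,u)$ solves $\dot x=f(x,u(s))$ on $[t,T]$, $x(t)=x$; $J(t,t',x,u)=\int_t^{t'}L(x(s;t,x,u),u(s))ds$; $Y(t,x)=\{J(t,T,x,u):u\in\mathcal{U}\}$. $P\subset\mathbb{R}^p$: closed convex pointed cone containing $0$ with nonempty interior; $\mathcal{E}(S,P)=\{y\in S:(y-P)\cap S=\{y\}\}$; $V(t,x)=\mathcal{E}(\mathrm{cl}\,Y(t,x),P)$. *)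

(* Defs.v *)
From HB Require Import structures.
From mathcomp Require Import all_boot all_order all_algebra.
From mathcomp Require Import all_classical all_reals all_analysis.
Set Implicit Arguments. Unset Strict Implicit. Unset Printing Implicit Defensive.
Import Order.TTheory GRing.Theory Num.Theory.
Import numFieldNormedType.Exports.
Local Open Scope classical_set_scope.
Local Open Scope ring_scope.

Section MOC.
Variable R : realType.

Definition vint (q : nat) (g : R -> 'rV[R]_q) (a b : R) : 'rV[R]_q :=
  \row_k Rintegral lebesgue_measure `[a, b] (fun s => g s ord0 k).

Definition admissible (m : nat) (T : R) (U : set 'rV[R]_m) (u : R -> 'rV[R]_m) :=
  [/\ (forall s, 0 <= s <= T -> U (u s)),
      (forall k : 'I_m, measurable_fun `[0, T] (fun s => u s ord0 k)) &
      exists M : R, forall s, 0 <= s <= T -> `|u s| <= M].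

(* X is the (Caratheodory) solution of x' = f(x,u(s)) on [t,T] with X t = x *)
Definition traj (n m : nat) (T : R) (f : 'rV[R]_n -> 'rV[R]_m -> 'rV[R]_n)
  (u : R -> 'rV[R]_m) (t : R) (x : 'rV[R]_n) (X : R -> 'rV[R]_n) :=
  {within `[t, T], continuous X} /\
  forall s, t <= s <= T -> X s = x + vint (fun r => f (X r) (u r)) t s.

Definition Yset (n m p : nat) (T : R) (U : set 'rV[R]_m)
  (f : 'rV[R]_n -> 'rV[R]_m -> 'rV[R]_n) (L : 'rV[R]_n -> 'rV[R]_m -> 'rV[R]_p)
  (t : R) (x : 'rV[R]_n) : set 'rV[R]_p :=
  [set y | exists u, admissible T U u /\ exists X, traj T f u t x X /\
           y = vint (fun s => L (X s) (u s)) t T].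

Definition effset (p : nat) (S P : set 'rV[R]_p) : set 'rV[R]_p :=
  [set y | S y /\ ([set y - q | q in P] `&` S) = [set y]].

Definition Vset (n m p : nat) (T : R) (U : set 'rV[R]_m)
  (f : 'rV[R]_n -> 'rV[R]_m -> 'rV[R]_n) (L : 'rV[R]_n -> 'rV[R]_m -> 'rV[R]_p)
  (P : set 'rV[R]_p) (t : R) (x : 'rV[R]_n) : set 'rV[R]_p :=
  effset (closure (Yset T U f L t x)) P.

Definition Ytilde (n m p : nat) (T : R) (U : set 'rV[R]_m)
  (f : 'rV[R]_n -> 'rV[R]_m -> 'rV[R]_n) (L : 'rV[R]_n -> 'rV[R]_m -> 'rV[R]_p)
  (P : set 'rV[R]_p) (tau t : R) (x : 'rV[R]_n) : set 'rV[R]_p :=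
  [set y | exists u, admissible T U u /\ exists X, traj T f u t x X /\
     exists v, Vset T U f L P (t + tau) (X (t + tau)) v /\
       y = vint (fun s => L (X s) (u s)) t (t + tau) + v].

Definition ordering_cone (p : nat) (P : set 'rV[R]_p) :=
  [/\ closed P /\ P 0,
      (forall (l : R) a, 0 <= l -> P a -> P (l *: a)),
      (forall (l : R) a b, 0 <= l <= 1 -> P a -> P b -> P (l *: a + (1 - l) *: b)),
      (P `&` [set - q | q in P] = [set 0]) &
      interior P !=set0].
End MOC.

(* Main.v *)
Require Import Defs.
From HB Require Import structures.
From mathcomp Require Import all_boot all_order all_algebra.
From mathcomp Require Import all_classical all_reals all_analysis.
From mathcomp Require Import measurable_realfun.
From mathcomp Require Import lra.
Import Order.TTheory GRing.Theory Num.Theory.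
Import numFieldNormedType.Exports.
Local Open Scope classical_set_scope.
Local Open Scope ring_scope.

Lemma within_comp (T1 T2 T3 : topologicalType) (A : set T1) (B : set T2)
  (g : T1 -> T2) (h : T2 -> T3) :
  {within A, continuous g} -> {within B, continuous h} ->
  (forall x, A x -> B (g x)) -> {within A, continuous (h \o g)}.
Proof.
move=> cg ch AB; apply/subspace_continuousP => x Ax.
have /(_ x Ax) cgx := (@subspace_continuousP _ A _ g).1 cg.
have /(_ (g x) (AB x Ax)) chx := (@subspace_continuousP _ B _ h).1 ch.
move=> W /chx; rewrite /= nbhs_simpl => /cgx; rewrite /= nbhs_simpl.
move=> H.
have H' : nbhs x (fun y => A y -> B (g y) -> W (h (g y))) := H.
have : nbhs x (fun y => A y -> W (h (g y))).
  by move: H'; apply: filterS => y Hy Ay; exact: Hy Ay (AB y Ay).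
by [].
Qed.

Lemma measurable_bigmaxr (R : realType) (D : set R) (I : Type) (s : seq I)
  (F : I -> R -> R) : measurable D -> (forall i, measurable_fun D (F i)) ->
  measurable_fun D (fun r => \big[Num.max/0]_(i <- s) F i r).
Proof.
move=> mD mF; elim: s => [|i s IH].
  under eq_fun do rewrite big_nil; exact: measurable_cst.
under eq_fun do rewrite big_cons.
exact: measurable_maxr.
Qed.

Lemma measurable_rVnorm (R : realType) (m : nat) (D : set R)
  (w : R -> 'rV[R]_m) (c : 'rV[R]_m) : measurable D ->
  (forall k, measurable_fun D (fun s => w s ord0 k)) ->
  measurable_fun D (fun s => `|w s - c|).
Proof.
move=> mD mw.
have -> : (fun s => `|w s - c|) =
  (fun s => \big[Num.max/0]_(ij : 'I_1 * 'I_m) `|w s ord0 ij.2 - c ord0 ij.2|).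
  apply/funext => s; rewrite [LHS]mx_normrE; apply: eq_bigr => -[i j] _.
  by rewrite !mxE (ord1 i).
apply: measurable_bigmaxr => // -[i j] /=.
apply: measurableT_comp => //; apply: measurable_funB => //.
Qed.

Lemma compact_net (R : realType) (m : nat) (U : set 'rV[R]_m) (e : R) :
  compact U -> 0 < e ->
  exists cs : seq 'rV[R]_m, (forall c, c \in cs -> U c) /\
    forall v, U v -> exists2 c, c \in cs & `|v - c| < e.
Proof.
move=> cU e0; move: cU; rewrite compact_cover => /(_ _ U (fun c => ball c e)).
case.
- by move=> c _; exact: ball_open.
- by move=> v Uv; exists v => //; exact: ballxx.
move=> D' D'U Ucov; exists (finmap.enum_fset D'); split.
  move=> c cD; have := D'U c cD; rewrite inE; exact.
move=> v /Ucov [c /= cD bcv]; exists c => //.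
by move: bcv; rewrite -ball_normE /= distrC.
Qed.

Fixpoint appr {R : realType} {m : nat} (c0 : 'rV[R]_m) (e : R) (v : 'rV[R]_m)
  (cs : seq 'rV[R]_m) : 'rV[R]_m :=
  if cs is c :: cs' then (if `|v - c| < e then c else appr c0 e v cs') else c0.

Lemma apprU (R : realType) (m : nat) (U : set 'rV[R]_m) c0 e v cs :
  U c0 -> (forall c, c \in cs -> U c) -> U (appr c0 e v cs).
Proof.
move=> Uc0; elim: cs => [|c cs IH] //= Hcs.
case: ifP => _; first by apply: Hcs; rewrite inE eqxx.
by apply: IH => d dcs; apply: Hcs; rewrite inE dcs orbT.
Qed.

Lemma appr_lt (R : realType) (m : nat) c0 e (v : 'rV[R]_m) cs :
  (exists2 c, c \in cs & `|v - c| < e) -> `|v - appr c0 e v cs| < e.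
Proof.
elim: cs => [|c cs IH] /=; first by case.
case=> d; rewrite inE => /orP[/eqP ->|dcs] vd.
  by rewrite vd.
case: ifP => // _; apply: IH; exists d => //.
Qed.

Lemma within_pair_cst (R : realType) (n m : nat) (D : set R) (X : R -> 'rV[R]_n)
  (c : 'rV[R]_m) : {within D, continuous X} ->
  {within D, continuous (fun s => (X s, c))}.
Proof.
move=> hX; apply/subspace_continuousP => s Ds.
have FF : Filter (within D (nbhs s)) by exact: within_filter.
have := @cvg_pair _ _ _ _ (nbhs (X s)) (nbhs c) FF _ _ X (fun=> c).
apply; last exact: cvg_cst.
exact: ((@subspace_continuousP _ D _ X).1 hX s Ds).
Qed.

Lemma meas_comp (R : realType) (n m : nat) (U : set 'rV[R]_m)
  (H : 'rV[R]_n * 'rV[R]_m -> R) (a b : R) (X : R -> 'rV[R]_n)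
  (w : R -> 'rV[R]_m) :
  compact U -> {within [set z | U z.2], continuous H} ->
  {within `[a, b], continuous X} -> (forall s, a <= s <= b -> U (w s)) ->
  (forall k, measurable_fun `[a, b] (fun s => w s ord0 k)) ->
  measurable_fun `[a, b] (fun s => H (X s, w s)).
Proof.
move=> cU hH hX hw mw.
have mD : measurable `[a, b] by exact: measurable_itv.
have [ab|ba] := leP a b; last first.
  rewrite set_itv_ge; last by rewrite bnd_simp -ltNge.
  exact: measurable_fun_set0.
set c0 := w a.
have Uc0 : U c0 by apply: hw; rewrite lexx ab.
have mc : forall c, U c -> measurable_fun `[a, b] (fun s => H (X s, c)).
  move=> c Uc; apply: subspace_continuous_measurable_fun => //.
  apply: (@within_comp _ _ _ `[a, b] [set z | U z.2] (fun s => (X s, c)) H) => //.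
  exact: within_pair_cst.
have /choice[cs Hcs] : forall j : nat, exists cs : seq 'rV[R]_m,
    (forall c, c \in cs -> U c) /\
    forall v, U v -> exists2 c, c \in cs & `|v - c| < j.+1%:R^-1.
  by move=> j; apply: compact_net => //; rewrite invr_gt0.
apply: (@measurable_fun_cvg _ _ R `[a, b]
  (fun j s => H (X s, appr c0 j.+1%:R^-1 (w s) (cs j)))).
- move=> j; have [csU _] := Hcs j.
  elim: (cs j) csU => [|c l IH] Hl /=; first exact: mc.
  have -> : (fun s => H (X s, if `|w s - c| < j.+1%:R^-1 then c
                               else appr c0 j.+1%:R^-1 (w s) l)) =
    (fun s => if `|w s - c| < j.+1%:R^-1 then H (X s, c)
              else H (X s, appr c0 j.+1%:R^-1 (w s) l)).
    by apply/funext => s; case: ifP.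
  apply: measurable_fun_if => //.
  + apply: measurable_fun_ltr => //; first exact: measurable_rVnorm.
  + apply: (measurable_funS mD); first exact: subIsetl.
    by apply: mc; apply: Hl; rewrite inE eqxx.
  + apply: (measurable_funS mD); first exact: subIsetl.
    by apply: IH => d dl; apply: Hl; rewrite inE dl orbT.
- move=> s Ds.
  have Uws : U (w s) by apply: hw; move: Ds; rewrite /= in_itv.
  have hc := (@subspace_continuousP _ [set z | U z.2] _ H).1 hH (X s, w s) Uws.
  apply: cvg_trans _ hc.
  move=> W; rewrite /= nbhs_simpl => hW.
  have hW' : nbhs (X s, w s) (fun y => U y.2 -> W (H y)) := hW.
  have conv : (fun j => (X s, appr c0 j.+1%:R^-1 (w s) (cs j))) @ \oo -->
              (X s, w s).
    have := @cvg_pair _ _ _ \oo (nbhs (X s)) (nbhs (w s)) _ _ _ (fun=> X s)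
      (fun j => appr c0 j.+1%:R^-1 (w s) (cs j)).
    apply; first exact: cvg_cst.
    apply/cvgrPdist_lt => e e0; near=> j.
    have [csU csn] := Hcs j.
    apply: (lt_trans (@appr_lt _ _ c0 _ _ _ (csn _ Uws))).
    near: j.
    exact: (@near_infty_natSinv_lt R (PosNum e0)).
  have Hc : \forall j \near \oo,
      U (appr c0 j.+1%:R^-1 (w s) (cs j)) ->
      W (H (X s, appr c0 j.+1%:R^-1 (w s) (cs j))) := conv _ hW'.
  have : \forall j \near \oo, W (H (X s, appr c0 j.+1%:R^-1 (w s) (cs j))).
    apply: filterS Hc => j Hj; apply: Hj.
    have [csU _] := Hcs j; exact: apprU.
  by [].
Unshelve. all: by end_near.
Qed.

Lemma coord_le_norm (R : realType) (n : nat) (v : 'rV[R]_n) (k : 'I_n) :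
  `|v ord0 k| <= `|v|.
Proof.
rewrite [leRHS]/Num.norm /= mx_normrE; apply/bigmax_geP; right => /=.
by exists (ord0, k).
Qed.

Lemma within_coord (R : realType) (n m p : nat) (A : set ('rV[R]_n * 'rV[R]_m))
  (F : 'rV[R]_n * 'rV[R]_m -> 'rV[R]_p) (k : 'I_p) :
  {within A, continuous F} -> {within A, continuous (fun z => F z ord0 k)}.
Proof.
move=> hF.
apply: (@within_comp _ _ _ A setT F (fun v : 'rV[R]_p => v ord0 k)) => //.
apply: continuous_subspaceT; exact: coord_continuous.
Qed.

Lemma int_comp (R : realType) (n m : nat) (U : set 'rV[R]_m)
  (H : 'rV[R]_n * 'rV[R]_m -> R) (M : R) (a b : R) (X : R -> 'rV[R]_n)
  (w : R -> 'rV[R]_m) :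
  compact U -> {within [set z | U z.2], continuous H} ->
  (forall z, U z.2 -> `|H z| <= M) ->
  {within `[a, b], continuous X} -> (forall s, a <= s <= b -> U (w s)) ->
  (forall k, measurable_fun `[a, b] (fun s => w s ord0 k)) ->
  lebesgue_measure.-integrable `[a, b] (EFin \o (fun s => H (X s, w s))).
Proof.
move=> cU hH HM hX hw mw.
apply: measurable_bounded_integrable.
- exact: measurable_itv.
- have := lebesgue_measure_itv `[a, b]; rewrite /= => ->; case: ifP => _ //; exact: ltry.
- exact: (@meas_comp R n m U H a b X w cU hH hX hw mw).
- exists M; split; first by rewrite num_real.
  move=> y My s; rewrite /= in_itv => /hw Uws.
  apply: le_trans (ltW My); exact: (HM (X s, w s)).
Qed.

Lemma Rint_glue (R : realType) (g g1 g2 : R -> R) (a b c : R) :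
  a <= b -> b <= c ->
  lebesgue_measure.-integrable `[a, c] (EFin \o g) ->
  lebesgue_measure.-integrable `[b, c] (EFin \o g2) ->
  {in `[a, b], g =1 g1} -> {in `]b, c], g =1 g2} ->
  \int[lebesgue_measure]_(x in `[a, c]) g x =
  \int[lebesgue_measure]_(x in `[a, b]) g1 x +
  \int[lebesgue_measure]_(x in `[b, c]) g2 x.
Proof.
move=> ab bc ig ig2 e1 e2.
have := @Rintegral_itvB R g (BLeft a) (BRight c) b ig.
rewrite !bnd_simp => /(_ ab bc) /eqP; rewrite subr_eq => /eqP ->.
rewrite addrC; congr (_ + _).
  by apply: eq_Rintegral => x /set_mem xI; exact: e1.
transitivity (\int[lebesgue_measure]_(x in `]b, c]) g2 x).
  by apply: eq_Rintegral => x /set_mem xI; exact: e2.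
apply: Rintegral_itv_obnd_cbnd.
apply: integrableS ig2 => //; exact: subset_itv_oc_cc.
Qed.

Lemma vint_glue (R : realType) (q : nat) (G G1 G2 : R -> 'rV[R]_q) (a b c : R) :
  a <= b -> b <= c ->
  (forall k, lebesgue_measure.-integrable `[a, c] (EFin \o (fun s => G s ord0 k))) ->
  (forall k, lebesgue_measure.-integrable `[b, c] (EFin \o (fun s => G2 s ord0 k))) ->
  {in `[a, b], G =1 G1} -> {in `]b, c], G =1 G2} ->
  vint G a c = vint G1 a b + vint G2 b c.
Proof.
move=> ab bc iG iG2 e1 e2; apply/rowP => k; rewrite !mxE.
apply: Rint_glue => //.
- by move=> r rI; rewrite e1.
- by move=> r rI; rewrite e2.
Qed.

Lemma adm_int (R : realType) (n m q : nat) (T : R) (U : set 'rV[R]_m)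
  (F : 'rV[R]_n -> 'rV[R]_m -> 'rV[R]_q) (M : R) (a b : R)
  (X : R -> 'rV[R]_n) (w : R -> 'rV[R]_m) :
  compact U -> {within [set z : 'rV[R]_n * 'rV[R]_m | U z.2],
            continuous (fun z => F z.1 z.2)} ->
  (forall x u, U u -> `|F x u| <= M) ->
  admissible T U w -> 0 <= a -> b <= T ->
  {within `[a, b], continuous X} ->
  forall k, lebesgue_measure.-integrable `[a, b]
    (EFin \o (fun s => F (X s) (w s) ord0 k)).
Proof.
move=> cU hF hM [wU wm _] a0 bT hX k.
apply: (@int_comp R n m U (fun z => F z.1 z.2 ord0 k) M a b X w cU).
- exact: (@within_coord R n m q _ (fun z => F z.1 z.2) k hF).
- move=> z Uz; apply: (le_trans (@coord_le_norm _ _ _ k)); exact: hM.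
- exact: hX.
- move=> s /andP[aS sb]; apply: wU; rewrite (le_trans a0 aS) (le_trans sb bT).
  by [].
- move=> j; apply: (measurable_funS (measurable_itv `[0, T])) (wm j).
  move=> s; rewrite /= !in_itv /= => /andP[aS sb]; rewrite (le_trans a0 aS) (le_trans sb bT).
by [].
Qed.

Lemma closure_transl (R : realType) (p : nat) (S1 S2 : set 'rV[R]_p)
  (J v : 'rV[R]_p) :
  (forall q, S1 q -> S2 (J + q)) -> closure S1 v -> closure S2 (J + v).
Proof.
move=> HS cv B /nbhs_ballP [e e0 be].
have [q [S1q bq]] := cv _ (@nbhsx_ballx _ _ v e e0).
exists (J + q); split; first exact: HS.
apply: be; move: bq; rewrite -!ball_normE /=.
by rewrite opprD addrACA subrr add0r.
Qed.

Theorem lemma5p2 (R : realType) (n m p : nat) (T : R) (hT : 0 < T)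
  (U : set 'rV[R]_m) (hUc : compact U) (hU0 : U !=set0)
  (f : 'rV[R]_n -> 'rV[R]_m -> 'rV[R]_n)
  (hfc : {within [set z : 'rV[R]_n * 'rV[R]_m | U z.2],
            continuous (fun z => f z.1 z.2)})
  (Kf Mf : R)
  (hfL : forall x1 x2 u, U u -> `|f x1 u - f x2 u| <= Kf * `|x1 - x2|)
  (hfM : forall x u, U u -> `|f x u| <= Mf)
  (L : 'rV[R]_n -> 'rV[R]_m -> 'rV[R]_p)
  (hLc : {within [set z : 'rV[R]_n * 'rV[R]_m | U z.2],
            continuous (fun z => L z.1 z.2)})
  (KL ML : R)
  (hLL : forall x1 x2 u, U u -> `|L x1 u - L x2 u| <= KL * `|x1 - x2|)
  (hLM : forall x u, U u -> `|L x u| <= ML)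
  (P : set 'rV[R]_p) (hP : ordering_cone P)
  (t : R) (ht : 0 <= t <= T) (tau : R) (htau : 0 < tau < T - t)
  (x : 'rV[R]_n) :
  Ytilde T U f L P tau t x `<=` closure (Yset T U f L t x).
Proof.
move=> y [u [hu [X [hX [v [hv ->]]]]]].
set s0 := t + tau.
have /andP[tau0 tauT] := htau.
have /andP[t0 tT] := ht.
have ts0 : t <= s0 by rewrite /s0; lra.
have s0T : s0 <= T by rewrite /s0; lra.
apply: (@closure_transl R p _ _ _ _ _ hv.1).
move=> q [u2 [hu2 [X2 [hX2 ->]]]].
have X2s0 : X2 s0 = X s0.
  rewrite (hX2.2 s0); last by rewrite lexx s0T.
  rewrite [X in _ + X](_ : _ = 0) ?addr0 //.
  by apply/rowP => k; rewrite !mxE set_itv1 Rintegral_set1.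
set w := fun r => if r <= s0 then u r else u2 r.
set X' := fun r => if r <= s0 then X r else X2 r.
have hw : admissible T U w.
  case: hu => uU um [M1 hM1]; case: hu2 => u2U u2m [M2 hM2].
  split.
  - by move=> s hs; rewrite /w; case: ifP => _; [exact: uU|exact: u2U].
  - move=> k.
    have -> : (fun s => w s ord0 k) =
      (fun s => if s <= s0 then u s ord0 k else u2 s ord0 k).
      by apply/funext => s; rewrite /w; case: ifP.
    apply: measurable_fun_if => //.
    + apply: measurable_fun_ler => //; exact: measurable_cst.
    + apply: (measurable_funS (measurable_itv `[0, T])) (um k).
      exact: subIsetl.
    + apply: (measurable_funS (measurable_itv `[0, T])) (u2m k).
      exact: subIsetl.
  - exists (Num.max M1 M2) => s hs; rewrite /w; case: ifP => _.
      by rewrite le_max hM1.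
    by rewrite le_max hM2 ?orbT.
have hXc : {within `[t, T], continuous X'}.
  have eT : `[t, T]%classic = `[t, s0] `|` `[s0, T].
    apply/seteqP; split=> r /=; rewrite !in_itv /=.
      move=> /andP[tr rT]; case: (leP r s0) => rs.
        by left; rewrite tr.
      by right; rewrite rT (ltW rs).
    by case=> /andP[a1 a2]; apply/andP; split; lra.
  rewrite eT; apply: withinU_continuous; [exact: itv_closed|exact: itv_closed| |].
  + apply: (@subspace_eq_continuous _ `[t, s0] _ X).
      move=> r; rewrite inE /= in_itv /= => /andP[_ rs].
      by rewrite /from_subspace /X' /=; case: ifP => //; rewrite rs.
    apply: (continuous_subspaceW _ hX.1) => r /=; rewrite !in_itv /=.
    by move=> /andP[a1 a2]; apply/andP; split; lra.
  + apply: (@subspace_eq_continuous _ `[s0, T] _ X2).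
      move=> r; rewrite inE /= in_itv /= => /andP[s0r _]; rewrite /from_subspace /X' /=.
      case: ifP => // rs.
      have -> : r = s0 by apply/eqP; rewrite eq_le rs s0r.
      by rewrite X2s0.
    exact: hX2.1.
have sub_c : forall (Y : R -> 'rV[R]_n) a b c d, a <= c -> d <= b ->
    {within `[a, b], continuous Y} -> {within `[c, d], continuous Y}.
  move=> Y a b c d ac db hY; apply: (continuous_subspaceW _ hY) => r /=.
  by rewrite !in_itv /= => /andP[a1 a2]; apply/andP; split; lra.
exists w; split => //.
exists X'; split; last first.
  symmetry; apply: vint_glue => //.
  - move=> k; apply: (@adm_int R n m p T U L ML t T X' w) => //.
  - move=> k; apply: (@adm_int R n m p T U L ML s0 T X2 u2) => //.
      by rewrite /s0; lra.
    exact: hX2.1.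
  - by move=> r; rewrite /= in_itv /= => /andP[_ rs]; rewrite /w /X' /= rs.
  - move=> r; rewrite /= in_itv /= => /andP[s0r _]; rewrite /w /X' /=.
    by rewrite leNgt s0r.
split => //.
move=> s /andP[ts sT].
rewrite /X' /=; case: (leP s s0) => hs.
  rewrite (hX.2 s); last by rewrite ts sT.
  congr (x + _); apply/rowP => k; rewrite !mxE.
  apply: eq_Rintegral => r /set_mem; rewrite /= in_itv /= => /andP[_ rs].
  by rewrite /w /X' /= (le_trans rs hs).
rewrite (hX2.2 s); last by rewrite (ltW hs) sT.
rewrite (hX.2 s0); last by rewrite ts0 s0T.
rewrite -addrA; congr (x + _); symmetry; apply: vint_glue => //.
- exact: ltW.
- move=> k; apply: (@adm_int R n m n T U f Mf t s X' w) => //.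
  exact: (sub_c X' t T t s (lexx _) sT hXc).
- move=> k; apply: (@adm_int R n m n T U f Mf s0 s X2 u2) => //.
  + by apply: le_trans ts0.
  + exact: (sub_c X2 s0 T s0 s (lexx _) sT hX2.1).
- by move=> r; rewrite /= in_itv /= => /andP[_ rs]; rewrite /w /X' /= rs.
- move=> r; rewrite /= in_itv /= => /andP[s0r _]; rewrite /w /X' /=.
  by rewrite leNgt s0r.
Qed.
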